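(* Let $\mathcal{R}$ be a consistent set of probabilistic constraints over $\mathcal{L}$ and $(\mathcal{R}_i)_{i\ge1}$ a sequence of consistent sets of probabilistic constraints over $\mathcal{L}$ such that $\mathrm{Mod}(\mathcal{R}_i)$ converges to $\mathrm{Mod}(\mathcal{R})$ in the Blaschke distance. Then the sequence $(P^{ME}_{\mathcal{R}_i})$ converges to $P^{ME}_{\mathcal{R}}$.
   Context: $\mathcal{L}$ is a propositional language over a finite set of variables; $\mathrm{Int}(\mathcal{L})$ is the set of truth assignments. A probability distribution over $\mathcal{L}$ is $P:\mathrm{Int}(\mathcal{L})\to[0,1]$ summing to $1$, regarded as a vector in $\mathbb{R}^{\mathrm{Int}(\mathcal{L})}$ with the Euclidean norm; $P(\phi)=\sum_{v\models\phi}P(v)$. A probabilistic constraint is $c_0+\sum_{i=1}^k c_i\,\mathsf{p}(\phi_i)\ge 0$ ($c_i\in\mathbb{R}$, $\phi_i\in\mathcal{L}$), satisfied by $P$ iff $c_0+\sum_ic_iP(\phi_i)\ge0$; $\mathrm{Mod}(\mathcal{R})$ is the set of distributions satisfying all constraints of $\mathcal{R}$, and $\mathcal{R}$ is consistent iff it is nonempty; then $P^{ME}_{\mathcal{R}}$ is the unique element of $\mathrm{Mod}(\mathcal{R})$ maximizing $H(P)=-\sum_vP(v)\log P(v)$. The Blaschke distance between convex sets $S_1,S_2$ of distributions is $\inf\{\delta\in\mathbb{R}\mid \forall P_1\in S_1\exists P_2\in S_2: \|P_1-P_2\|\le\delta \text{ and } \forall P_2\in S_2\exists P_1\in S_1:\|P_2-P_1\|\le\delta\}$.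 *)

(* Defs.v *)
From HB Require Import structures.
From mathcomp Require Import all_boot all_order all_algebra.
From mathcomp Require Import all_classical all_reals all_analysis.
Set Implicit Arguments. Unset Strict Implicit. Unset Printing Implicit Defensive.
Import Order.TTheory GRing.Theory Num.Theory numFieldNormedType.Exports.
Local Open Scope classical_set_scope.
Local Open Scope ring_scope.

Inductive form (n : nat) : Type :=
  | FVar of 'I_n
  | FTop
  | FBot
  | FNeg of form n
  | FAnd of form n & form n
  | FOr of form n & form n
  | FImp of form n & form n.

Definition interp (n : nat) := {ffun 'I_n -> bool}.

Fixpoint models (n : nat) (v : interp n) (f : form n) : bool :=
  match f with
  | FVar i => v i
  | FTop => true
  | FBot => false
  | FNeg g => ~~ models v g
  | FAnd g h => models v g && models v h
  | FOr g h => models v g || models v h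
  | FImp g h => models v g ==> models v h
  end.

Definition is_distr (R : realType) (n : nat) (P : interp n -> R) : Prop :=
  (forall v, 0 <= P v) /\ \sum_(v : interp n) P v = 1.

Definition prob (R : realType) (n : nat) (P : interp n -> R) (f : form n) : R :=
  \sum_(v : interp n | models v f) P v.

(* Probabilistic constraint  c0 + sum_i c_i p(phi_i) >= 0. *)
Record constraint (R : realType) (n : nat) := Constraint {
  c_const : R;
  c_terms : seq (R * form n) }.

Definition satisfies (R : realType) (n : nat) (P : interp n -> R)
  (c : constraint R n) : Prop :=
  0 <= c_const c + \sum_(t <- c_terms c) t.1 * prob P t.2.

Definition Mod (R : realType) (n : nat) (Rs : set (constraint R n))
  : set (interp n -> R) :=
  [set P | is_distr P /\ forall c, Rs c -> satisfies P c].

Definition consistent (R : realType) (n : nat) (Rs : set (constraint R n)) : Prop :=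
  Mod Rs !=set0.

Definition entropy (R : realType) (n : nat) (P : interp n -> R) : R :=
  - \sum_(v : interp n) (if P v == 0 then 0 else P v * ln (P v)).

Definition is_ME (R : realType) (n : nat) (Rs : set (constraint R n))
  (P : interp n -> R) : Prop :=
  Mod Rs P /\ forall Q, Mod Rs Q -> entropy Q <= entropy P.

Definition eucl_dist (R : realType) (n : nat) (P Q : interp n -> R) : R :=
  Num.sqrt (\sum_(v : interp n) (P v - Q v) ^+ 2).

Definition blaschke (R : realType) (n : nat) (S1 S2 : set (interp n -> R)) : R :=
  inf [set d : R |
         (forall P1, S1 P1 -> exists P2, S2 P2 /\ eucl_dist P1 P2 <= d) /\
         (forall P2, S2 P2 -> exists P1, S1 P1 /\ eucl_dist P2 P1 <= d)].

(* Main.v *)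
Require Import Defs.
From HB Require Import structures.
From mathcomp Require Import all_boot all_order all_algebra.
From mathcomp Require Import all_classical all_reals all_analysis.
From mathcomp Require Import ring lra.
Import Order.TTheory GRing.Theory Num.Theory numFieldNormedType.Exports.
Local Open Scope classical_set_scope.
Local Open Scope ring_scope.
Section Real.
Variable R : realType.
Implicit Types x y a b m : R.

Lemma ln_le_sub1 x : 0 < x -> ln x <= x - 1.
Proof. move=> x0; have h := @le_ln1Dx R (x - 1); rewrite addrCA subrr addr0 in h; apply: h; lra. Qed.

Lemma xlnx_lb x : 0 < x -> - (2 * Num.sqrt x) <= x * ln x.
Proof.
move=> x0; set s := Num.sqrt x.
have s0 : 0 < s by rewrite sqrtr_gt0.
have xs : x = s ^+ 2 by rewrite sqr_sqrtr // ltW.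
have h := @ln_le_sub1 (s^-1) (ltac:(by rewrite invr_gt0)).
rewrite lnV ?posrE // in h.
rewrite xs lnXn // mulr2n.
have e : s * s^-1 = 1 by rewrite mulfV // gt_eqF.
have : s ^+ 2 * (- ln s) <= s ^+ 2 * (s^-1 - 1) by rewrite ler_wpM2l // sqr_ge0.
rewrite mulrBr mulr1 expr2 mulfK ?gt_eqF // mulr2n mulrDr mulrN.
move=> h2; have : 0 <= s * s by nra.
lra.
Qed.

Definition phi x := if x == 0 then 0 else x * ln x.

Lemma phi_cont_aux a b : 0 <= a -> a <= b -> b <= 1 ->
  `|phi a - phi b| <= 2 * Num.sqrt (b - a).
Proof.
move=> a0 ab b1.
have sd0 := sqrtr_ge0 (b - a).
have dsd : b - a <= Num.sqrt (b - a).
  have e := @sqr_sqrtr _ (b - a) (ltac:(rewrite subr_ge0 //)).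
  have : Num.sqrt (b - a) <= 1 by rewrite -sqrtr1 ler_wsqrtr //; lra.
  nra.
rewrite /phi; have [->|an0] := eqVneq a 0.
  rewrite /= subr0 sub0r normrN.
  have [->|bn0] := eqVneq b 0; first by rewrite /= normr0 sqrtr0; lra.
  have bp : 0 < b by rewrite lt_def bn0; lra.
  have lnb : ln b <= 0 by apply: ln_le0.
  have := @xlnx_lb _ bp.
  have : b * ln b <= 0 by nra.
  move=> h1 h2; rewrite ler0_norm //; lra.
have ap : 0 < a by rewrite lt_def an0 a0.
have bp : 0 < b by lra.
rewrite /= gt_eqF //.
rewrite distrC; apply/ler_normlP; split.
- have lab : ln a <= ln b by rewrite ler_ln ?posrE // ltW.
  have [d0|dp] := eqVneq (b - a) 0.
    have -> : b = a by lra.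
    by rewrite subrr; have := sqrtr_ge0 (a - a); lra.
  have dpos : 0 < b - a by rewrite lt_def dp subr_ge0.
  have ld : ln (b - a) <= ln b by rewrite ler_ln ?posrE //; lra.
  have := @xlnx_lb _ dpos.
  have : (b - a) * ln (b - a) <= (b - a) * ln b by rewrite ler_wpM2l // ltW.
  nra.
- have h := @ln_le_sub1 _ (divr_gt0 bp ap).
  rewrite ln_div ?posrE // in h.
  have lnb : ln b <= 0 by apply: ln_le0.
  have e : a * (b / a) = b by rewrite mulrC divfK // gt_eqF.
  have : a * (ln b - ln a) <= a * (b / a - 1) by rewrite ler_wpM2l // ltW.
  rewrite !mulrBr e mulr1; nra.
Qed.


Lemma phi_shift x m : 0 <= x -> 0 < m ->
  2 * (x - Num.sqrt x * Num.sqrt m) <= phi x - x * ln m.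
Proof.
move=> x0 m0; rewrite /phi; have [->|xn0] := eqVneq x 0.
  by rewrite /= sqrtr0 !mul0r subrr mulr0.
have xp : 0 < x by rewrite lt_def xn0.
rewrite /=.
set sx := Num.sqrt x; set sm := Num.sqrt m.
have sxp : 0 < sx by rewrite sqrtr_gt0.
have smp : 0 < sm by rewrite sqrtr_gt0.
have ex : x = sx ^+ 2 by rewrite sqr_sqrtr // ltW.
have em : m = sm ^+ 2 by rewrite sqr_sqrtr // ltW.
have h := @ln_le_sub1 _ (divr_gt0 smp sxp).
rewrite ln_div ?posrE // in h.
have e : sx ^+ 2 * (sm / sx) = sx * sm.
  by rewrite expr2 mulrC -!mulrA (mulrC sm) mulrA mulVf ?gt_eqF // mul1r mulrC.
have : sx ^+ 2 * (ln sm - ln sx) <= sx ^+ 2 * (sm / sx - 1).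
  by rewrite ler_wpM2l // sqr_ge0.
rewrite !mulrBr e mulr1 => h2.
clearbody sx sm; subst x m.
rewrite !lnXn // !mulr2n.
have : sx ^+ 2 * (ln sx + ln sx) - sx ^+ 2 * (ln sm + ln sm) =
   - 2 * (sx ^+ 2 * ln sm - sx ^+ 2 * ln sx) by ring.
lra.
Qed.

Lemma phi_mid a b : 0 <= a -> a <= 1 -> 0 <= b -> b <= 1 ->
  (a - b) ^+ 2 / 8 <= phi a + phi b - 2 * phi ((a + b) / 2).
Proof.
move=> a0 a1 b0 b1.
have [abz|abn] := eqVneq (a + b) 0.
  have -> : a = 0 by lra.
  have -> : b = 0 by lra.
  rewrite /phi !eqxx /= addr0 mul0r eqxx; lra.
set m := (a + b) / 2.
have mp : 0 < m by rewrite /m divr_gt0 // lt_def abn; lra.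
have h1 := @phi_shift _ _ a0 mp.
have h2 := @phi_shift _ _ b0 mp.
have pm : 2 * phi m = (a + b) * ln m.
  by rewrite /phi gt_eqF //= /m; field.
set sa := Num.sqrt a in h1 *; set sb := Num.sqrt b in h2 *.
set sm := Num.sqrt m in h1 h2.
have ea : a = sa ^+ 2 by rewrite sqr_sqrtr.
have eb : b = sb ^+ 2 by rewrite sqr_sqrtr.
have emm : m = sm ^+ 2 by rewrite sqr_sqrtr // ltW.
have sa0 : 0 <= sa := sqrtr_ge0 _.
have sb0 : 0 <= sb := sqrtr_ge0 _.
have smp : 0 < sm by rewrite sqrtr_gt0.
have sa1 : sa <= 1 by rewrite -sqrtr1 ler_wsqrtr.
have sb1 : sb <= 1 by rewrite -sqrtr1 ler_wsqrtr.
have rel : 2 * sm ^+ 2 = sa ^+ 2 + sb ^+ 2 by rewrite -emm -ea -eb /m; field.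
set T := 2 * (sa ^+ 2 + sb ^+ 2) - 2 * sm * (sa + sb).
have key : T * (2 * sm + (sa + sb)) = 2 * sm * (sa - sb) ^+ 2.
  apply/eqP; rewrite -subr_eq0; apply/eqP.
  have -> : T * (2 * sm + (sa + sb)) - 2 * sm * (sa - sb) ^+ 2 =
    - 2 * (sa + sb) * (2 * sm ^+ 2 - (sa ^+ 2 + sb ^+ 2)) by rewrite /T; ring.
  by rewrite rel subrr mulr0.
have s2 : sa + sb <= 2 * sm.
  have : (sa + sb) ^+ 2 <= (2 * sm) ^+ 2.
    have := sqr_ge0 (sa - sb); rewrite exprMn; nra.
  rewrite ler_pXn2r // ?nnegrE; lra.
have pos : 0 < 2 * sm + (sa + sb) by lra.
have TL : (sa - sb) ^+ 2 / 2 <= T.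
  have : (sa - sb) ^+ 2 / 2 * (2 * sm + (sa + sb)) <= T * (2 * sm + (sa + sb)).
    rewrite key; have : 0 <= (sa - sb) ^+ 2 * (2 * sm - (sa + sb)) by rewrite mulr_ge0 ?sqr_ge0 // subr_ge0.
    nra.
  by rewrite ler_pM2r.
have : (a - b) ^+ 2 <= 4 * (sa - sb) ^+ 2.
  rewrite ea eb.
  have -> : sa ^+ 2 - sb ^+ 2 = (sa - sb) * (sa + sb) by ring.
  rewrite exprMn mulrC; apply: ler_wpM2r; first exact: sqr_ge0.
  nra.
have : T <= phi a + phi b - 2 * phi m.
  rewrite pm /T -ea -eb; lra.
lra.
Qed.

End Real.
Arguments phi {R}.
Arguments ln_le_sub1 {R}.
Arguments xlnx_lb {R}.
Arguments phi_cont_aux {R}.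
Arguments phi_shift {R}.
Arguments phi_mid {R}.

Section Distr.
Variables (R : realType) (n : nat).
Implicit Types P Q : interp n -> R.

Lemma distr_le1 P v : is_distr P -> P v <= 1.
Proof.
case=> P0 P1; rewrite -P1 (bigD1 v) //= lerDl; exact: sumr_ge0.
Qed.
Arguments distr_le1 [P] v.

Lemma dist_sqr P Q : eucl_dist P Q ^+ 2 = \sum_v (P v - Q v) ^+ 2.
Proof. by rewrite /eucl_dist sqr_sqrtr // sumr_ge0 // => v _; exact: sqr_ge0. Qed.

Lemma dist_ge0 P Q : 0 <= eucl_dist P Q.
Proof. exact: sqrtr_ge0. Qed.

Lemma distC P Q : eucl_dist P Q = eucl_dist Q P.
Proof. by rewrite /eucl_dist; congr Num.sqrt; apply: eq_bigr => v _; rewrite -sqrrN opprB. Qed.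

Lemma coord_le_dist P Q v : `|P v - Q v| <= eucl_dist P Q.
Proof.
rewrite /eucl_dist -sqrtr_sqr; apply: ler_wsqrtr.
rewrite (bigD1 v) //= lerDl; apply: sumr_ge0 => w _; exact: sqr_ge0.
Qed.

Lemma dist_tri2 P Q S :
  eucl_dist P S ^+ 2 <= 2 * (eucl_dist P Q ^+ 2 + eucl_dist Q S ^+ 2).
Proof.
rewrite !dist_sqr -big_split /= mulr_sumr; apply: ler_sum => v _.
have := sqr_ge0 ((P v - Q v) - (Q v - S v)); nra.
Qed.

Lemma dist_le2 P Q : is_distr P -> is_distr Q -> eucl_dist P Q <= 2.
Proof.
move=> hP hQ.
have : \sum_v (P v - Q v) ^+ 2 <= \sum_v (P v + Q v).
  apply: ler_sum => v _.
  have := distr_le1 v hP; have := distr_le1 v hQ.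
  have := hP.1 v; have := hQ.1 v; nra.
rewrite big_split /= hP.2 hQ.2 => h.
rewrite /eucl_dist -(@ger0_norm _ 2) // -sqrtr_sqr; apply: ler_wsqrtr; lra.
Qed.

Lemma phi_cont (a b : R) : 0 <= a -> a <= 1 -> 0 <= b -> b <= 1 ->
  `|phi a - phi b| <= 2 * Num.sqrt `|a - b|.
Proof.
move=> a0 a1 b0 b1; have [ab|ba] := leP a b.
  by rewrite [`|a - b|]distrC (ger0_norm (ltac:(rewrite subr_ge0 //) : 0 <= b - a)) phi_cont_aux.
rewrite (ger0_norm (ltac:(rewrite subr_ge0 ltW //) : 0 <= a - b)).
by rewrite distrC phi_cont_aux // ltW.
Qed.

Definition Nn : R := \sum_(v : interp n) 1.

Lemma Nn_ge0 : 0 <= Nn.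
Proof. by apply: sumr_ge0. Qed.

Lemma ent_cont P Q e : is_distr P -> is_distr Q -> eucl_dist P Q <= e ->
  entropy P - entropy Q <= Nn * (2 * Num.sqrt e).
Proof.
move=> hP hQ de.
have -> : entropy P - entropy Q = \sum_v (phi (Q v) - phi (P v)).
  by rewrite /entropy sumrB /phi; ring.
rewrite /Nn mulr_suml; apply: ler_sum => v _; rewrite mul1r.
apply: le_trans (ler_norm _) _.
apply: le_trans (@phi_cont (Q v) (P v) (hQ.1 v) (distr_le1 v hQ) (hP.1 v) (distr_le1 v hP)) _.
rewrite ler_pM2l //; apply: ler_wsqrtr.
by rewrite distrC; apply: le_trans (coord_le_dist _ _ _) de.
Qed.

Lemma Mod_mid S P Q : Mod S P -> Mod S Q -> Mod S (fun v => (P v + Q v) / 2).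
Proof.
move=> [[P0 P1] hP] [[Q0 Q1] hQ]; split; first split.
- by move=> v; apply: divr_ge0 => //; apply: addr_ge0.
- by rewrite -mulr_suml big_split /= P1 Q1; field.
move=> c /[dup] /hP hp /hQ hq; move: hp hq; rewrite /satisfies.
have -> : \sum_(t <- c_terms c) t.1 * prob (fun v => (P v + Q v) / 2) t.2 =
  (\sum_(t <- c_terms c) t.1 * prob P t.2 + \sum_(t <- c_terms c) t.1 * prob Q t.2) / 2.
  rewrite -big_split /= mulr_suml; apply: eq_bigr => t _.
  rewrite /prob -mulr_suml big_split /=; ring.
lra.
Qed.

Lemma ent_strong S P Q : is_ME S P -> Mod S Q ->
  eucl_dist P Q ^+ 2 <= 8 * (entropy P - entropy Q).
Proof.
move=> [MP hmax] MQ.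
have hM := hmax _ (@Mod_mid S P Q MP MQ).
have key : eucl_dist P Q ^+ 2 / 8 <=
   \sum_v (phi (P v) + phi (Q v) - 2 * phi ((P v + Q v) / 2)).
  rewrite dist_sqr mulr_suml; apply: ler_sum => v _; apply: phi_mid.
  - exact: MP.1.1. - exact: (distr_le1 _ MP.1). - exact: MQ.1.1. - exact: (distr_le1 _ MQ.1).
have eH : forall X : interp n -> R, entropy X = - \sum_v phi (X v) by [].
rewrite !eH /= in hM *; move: hM key.
rewrite !big_split /= sumrN -mulr_sumr.
lra.
Qed.

End Distr.
Arguments dist_sqr {R n}.
Arguments dist_ge0 {R n}.
Arguments distC {R n}.
Arguments coord_le_dist {R n}.
Arguments dist_tri2 {R n}.
Arguments dist_le2 {R n}.
Arguments ent_cont {R n}.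
Arguments Mod_mid {R n}.
Arguments ent_strong {R n}.

Theorem lemma3 (R : realType) (n : nat)
  (R0 : set (constraint R n)) (Rs : nat -> set (constraint R n))
  (P0 : interp n -> R) (Ps : nat -> interp n -> R) :
  consistent R0 ->
  (forall i, consistent (Rs i)) ->
  blaschke (Mod (Rs i)) (Mod R0) @[i --> \oo] --> 0 ->
  is_ME R0 P0 ->
  (forall i, is_ME (Rs i) (Ps i)) ->
  eucl_dist (Ps i) P0 @[i --> \oo] --> 0.
Proof.
move=> _ hcons hb hME hMEs.
have M0 := hME.1.
pose N := Nn R n.
have N0 : 0 <= N := @Nn_ge0 R n.
pose K : R := 2 * (1 + 32 * N).
have K0 : 0 < K by rewrite /K; lra.
have bound : forall i e, blaschke (Mod (Rs i)) (Mod R0) < e -> e <= 1 ->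
    eucl_dist (Ps i) P0 ^+ 2 <= K * Num.sqrt e.
  move=> i e hbi e1.
  have ne : [set d : R |
         (forall P1, Mod (Rs i) P1 -> exists P2, Mod R0 P2 /\ eucl_dist P1 P2 <= d) /\
         (forall P2, Mod R0 P2 -> exists P1, Mod (Rs i) P1 /\ eucl_dist P2 P1 <= d)] !=set0.
    exists 2; split.
    - move=> P1 HP1; exists P0; split => //; apply: dist_le2; [exact: HP1.1 | exact: M0.1].
    - move=> P2 HP2; case: (hcons i) => P1 HP1; exists P1; split => //.
      by apply: dist_le2; [exact: HP2.1 | exact: HP1.1].
  have [d [h1 h2] dlt] := inf_lt ne hbi.
  have [Q' [MQ' dQ']] := h1 (Ps i) (hMEs i).1.
  have [Q [MQ dQ]] := h2 P0 M0.
  have d0 : 0 <= d := le_trans (dist_ge0 _ _) dQ.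
  have e1' := ent_cont _ _ _ M0.1 MQ.1 dQ.
  have e2' := ent_cont _ _ _ (hMEs i).1.1 MQ'.1 dQ'.
  have e3 := (hMEs i).2 Q MQ.
  have s1 := ent_strong _ _ _ hME MQ'.
  have t1 := dist_tri2 (Ps i) Q' P0.
  rewrite (distC Q' P0) in t1.
  have dq2 : eucl_dist (Ps i) Q' ^+ 2 <= d ^+ 2.
    have := dist_ge0 (Ps i) Q'; nra.
  have sd0 := sqrtr_ge0 d.
  have sdd : Num.sqrt d ^+ 2 = d by rewrite sqr_sqrtr.
  have sd1 : Num.sqrt d <= 1 by rewrite -sqrtr1 ler_wsqrtr //; lra.
  have aux : forall s : R, 0 <= s -> s <= 1 -> (s ^+ 2) ^+ 2 <= s.
    move=> s sz so; have : s ^+ 2 <= 1 by nra.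
    have : 0 <= s ^+ 2 by nra.
    nra.
  have d2 : d ^+ 2 <= Num.sqrt d by rewrite -{1}sdd; apply: aux.
  have sde : Num.sqrt d <= Num.sqrt e by apply: ler_wsqrtr; lra.
  have Nde : N * Num.sqrt d <= N * Num.sqrt e by rewrite ler_wpM2l.
  rewrite /K /N in Nde N0 *; lra.
apply/cvgrPdist_lt => eps eps0.
pose eta := Num.min 1 ((eps ^+ 2 / (2 * K)) ^+ 2).
have c0 : 0 < eps ^+ 2 / (2 * K) by apply: divr_gt0; [exact: exprn_gt0 | lra].
have eta0 : 0 < eta by rewrite /eta lt_min ltr01 exprn_gt0.
have eta1 : eta <= 1 by rewrite /eta ge_min lexx.
have seta : Num.sqrt eta <= eps ^+ 2 / (2 * K).
  have cn : `|eps ^+ 2 / (2 * K)| = eps ^+ 2 / (2 * K) by rewrite ger0_norm // ltW.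
  rewrite -[X in _ <= X]cn -sqrtr_sqr.
  have hle : eta <= (eps ^+ 2 / (2 * K)) ^+ 2 by rewrite /eta ge_min lexx orbT.
  exact: (ler_wsqrtr hle).
move/cvgrPdist_lt: hb => /(_ _ eta0).
apply: filterS => i hi.
rewrite sub0r normrN in hi.
have bi : blaschke (Mod (Rs i)) (Mod R0) < eta := le_lt_trans (ler_norm _) hi.
have hB := bound i eta bi eta1.
have KK : K * (eps ^+ 2 / (2 * K)) = eps ^+ 2 / 2 by field; lra.
have : K * Num.sqrt eta <= K * (eps ^+ 2 / (2 * K)) by rewrite ler_wpM2l // ltW.
rewrite KK => h.
rewrite sub0r normrN ger0_norm; last exact: dist_ge0.
have D0 := dist_ge0 (Ps i) P0.
have D2 : eucl_dist (Ps i) P0 ^+ 2 < eps ^+ 2.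
  have : 0 < eps ^+ 2 := exprn_gt0 _ eps0.
  move: hB h; clear; lra.
move: D0 D2; generalize (eucl_dist (Ps i) P0) => D D0 D2.
clear -D0 D2 eps0; nra.
Qed.
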